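(* Define polynomials $Q_k(n)\in\mathbb{Q}[n]$ by $Q_0=1$, $Q_1=n$ and, for $k\ge 1$, $$Q_{k+1}(n)=(n-k)\,Q_k(n)+k(2n-k+1)\,Q_{k-1}(n).$$ Then for all integers $n\ge 0$ and $k\ge 0$, $$a_n^{(n-k)}=\frac{1}{k!}\,Q_k(n),$$ $Q_k$ has degree $k$, and explicitly $Q_2=n(n+1)$, $Q_3=(n-1)n(n+4)$, $Q_4=(n-1)n(n^2+7n-6)$, $Q_5=(n-2)(n-1)n(n+1)(n+12)$, $Q_6=(n-2)(n-1)n(n^3+18n^2+17n-120)$, $Q_7=(n-3)(n-2)(n-1)n(n^3+27n^2+116n-120)$, $Q_8=(n-3)(n-2)(n-1)n(n+1)(n+10)(n^2+23n-84)$, $Q_9=n(n-1)(n-2)(n-3)(n-4)(n^4+46n^3+467n^2+86n-3360)$, $Q_{10}=n(n-1)(n-2)(n-3)(n-4)(n^5+55n^4+665n^3-895n^2-16626n+15120)$.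
   Context: For integers $n\ge 0$ and $k\in\mathbb{Z}$, let $a_n^{(k)}$ be the coefficient of $x^{n+k}$ in $(1+x+x^2)^n$, so that $(1+x+x^2)^n=\sum_{k=-n}^{n}a_n^{(k)}x^{n+k}$ and $a_n^{(k)}=0$ for $|k|>n$. *)

(* Defs.v *)
From HB Require Import structures.
From mathcomp Require Import all_boot all_order all_algebra.
Set Implicit Arguments. Unset Strict Implicit. Unset Printing Implicit Defensive.
Import Order.TTheory GRing.Theory Num.Theory.
Local Open Scope ring_scope.

(* a_n^{(k)} : coefficient of x^(n+k) in (1+x+x^2)^n, zero when n+k < 0. *)
Definition trinom_coef (n : nat) (k : int) : rat :=
  match (n%:Z + k)%R with
  | Posz m => ((1 + 'X + 'X^2 : {poly rat}) ^+ n)`_m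
  | Negz _ => 0
  end.

(* Qpair k = (Q_k, Q_{k+1}); Q_{k+1} = (n-k) Q_k + k(2n-k+1) Q_{k-1}. *)
Fixpoint Qpair (k : nat) : {poly rat} * {poly rat} :=
  match k with
  | 0%N => (1, 'X)
  | k'.+1 =>
      let (q0, q1) := Qpair k' in
      (q1, ('X - (k%:R)%:P) * q1
             + ((k%:R)%:P * (2%:R *: 'X - (k%:R)%:P + 1)) * q0)
  end.

Definition Q (k : nat) : {poly rat} := (Qpair k).1.

(* Main.v *)
Require Import Defs.
From HB Require Import structures.
From mathcomp Require Import all_boot all_order all_algebra.
From mathcomp Require Import zify ring lra.
Import Order.TTheory GRing.Theory Num.Theory.
Local Open Scope ring_scope.

Definition H (q : {poly rat}) (z : int) : rat :=
  match z with Posz m => q`_m | Negz _ => 0 end.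

Lemma H_neg q z : z < 0 -> H q z = 0.
Proof. by case: z. Qed.

Lemma HD q r z : H (q + r) z = H q z + H r z.
Proof. by case: z => [m|k] /=; rewrite ?coefD ?addr0. Qed.

Lemma HMn q z k : H (q *+ k) z = H q z *+ k.
Proof. by case: z => [m|k'] /=; rewrite ?coefMn ?mul0rn. Qed.

Lemma HMX q z : H (q * 'X) z = H q (z - 1).
Proof.
case: z => [[|m]|k] /=; rewrite ?coefMX //=.
by rewrite subn1.
Qed.

Lemma Hderiv q z : H q^`() z = (z + 1)%:~R * H q (z + 1).
Proof.
case: z => [m|[|k]] /=.
- have -> : (Posz m + 1)%R = Posz m.+1 by lia.
  by rewrite coef_deriv -mulr_natl addn1.
- by rewrite mul0r.
- by rewrite mulr0.
Qed.

Definition P : {poly rat} := 1 + 'X + 'X^2.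

Lemma HMP q z : H (q * P) z = H q z + H q (z - 1) + H q (z - 1 - 1).
Proof. by rewrite /P !mulrDr mulr1 expr2 mulrA !HD !HMX. Qed.

Lemma Pderiv : P^`() = 1 + 'X *+ 2.
Proof. by rewrite /P !derivE /= add0r expr1. Qed.

Lemma key_poly n : (P ^+ n)^`() * P = (P ^+ n + (P ^+ n * 'X) *+ 2) *+ n.
Proof.
rewrite deriv_exp Pderiv; case: n => [|n]; first by rewrite !mulr0n mul0r.
rewrite mulrnAl -mulrA -exprSr /=; congr (_ *+ _).
by rewrite mulrDl mul1r mulrnAl mulrC.
Qed.

Lemma key n z :
  (z + 1)%:~R * H (P ^+ n) (z + 1) + z%:~R * H (P ^+ n) z
  + (z - 1)%:~R * H (P ^+ n) (z - 1)
  = (H (P ^+ n) z + H (P ^+ n) (z - 1) *+ 2) *+ n.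
Proof.
have := congr1 (fun q => H q z) (key_poly n).
by rewrite /= HMP !Hderiv HMn HD HMn HMX !subrK.
Qed.

Lemma c0 n : H (P ^+ n) 0 = 1.
Proof.
elim: n => [|n IH]; first by rewrite expr0 /= coef1.
by rewrite exprSr HMP IH !H_neg ?addr0.
Qed.

Lemma QS k : Q k.+2 = ('X - (k.+1%:R)%:P) * Q k.+1
   + ((k.+1%:R)%:P * (2%:R *: 'X - (k.+1%:R)%:P + 1)) * Q k.
Proof. by rewrite /Q /=; case: (Qpair k). Qed.

Lemma Q0 : Q 0 = 1. Proof. by []. Qed.
Lemma Q1 : Q 1 = 'X. Proof. by []. Qed.

Lemma keyN n m : m.+2%:R * (P ^+ n)`_m.+2 + m.+1%:R * (P ^+ n)`_m.+1
  + m%:R * (P ^+ n)`_m = ((P ^+ n)`_m.+1 + (P ^+ n)`_m *+ 2) *+ n.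
Proof.
have := key n m.+1.
rewrite (_ : (Posz m.+1 + 1)%R = Posz m.+2); last by lia.
rewrite (_ : (Posz m.+1 - 1)%R = Posz m); last by lia.
by [].
Qed.

Lemma key0 n : (P ^+ n)`_1 = n%:R.
Proof.
have := key n 0; rewrite add0r sub0r.
have := c0 n; rewrite /= => ->.
rewrite mulr0z mul0r mulr0 !addr0 mulr1z mul1r => ->.
by [].
Qed.

Lemma Qeval n k : (Q k).[n%:R] = k`!%:R * H (P ^+ n) k
   /\ (Q k.+1).[n%:R] = k.+1`!%:R * H (P ^+ n) k.+1.
Proof.
elim: k => [|k [IH1 IH2]].
  rewrite Q0 Q1 hornerC hornerX c0 mulr1 /= key0 mul1r; split => //.
split => //.
rewrite QS !hornerE IH1 IH2 /=.
have E := keyN n k.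
set a2 := (P ^+ n)`_k.+2 in E *; set a1 := (P ^+ n)`_k.+1 in E *;
set a0 := (P ^+ n)`_k in E *.
have E' : k.+2%:R * a2 = (a1 + a0 *+ 2) *+ n - k.+1%:R * a1 - k%:R * a0.
  by rewrite -E; ring.
rewrite (factS k.+1) natrM.
rewrite (_ : k.+2%:R * (k.+1)`!%:R * a2 = (k.+1)`!%:R * (k.+2%:R * a2));
  last by ring.
rewrite E' (factS k) natrM.
ring.
Qed.

Lemma sizeP : (size P <= 3)%N.
Proof.
rewrite /P; apply: leq_trans (size_polyD _ _) _; rewrite geq_max size_polyXn andbT.
apply: leq_trans (size_polyD _ _) _; rewrite geq_max size_polyX andbT.
by apply: leq_trans (size_polyC_leq1 _) _.
Qed.

Lemma Hbig n z : (n%:Z + n%:Z < z)%R -> H (P ^+ n) z = 0.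
Proof.
case: z => [m|k] //= hm; apply: nth_default.
apply: leq_trans (size_poly_exp_leq _ _) _.
have h := sizeP; rewrite (_ : (size P).-1 = 2 - (3 - size P))%N; last by lia.
have : (2 * n < m)%N by lia.
by nia.
Qed.

Lemma Hsym n z : H (P ^+ n) z = H (P ^+ n) (n%:Z + n%:Z - z).
Proof.
elim: n z => [|n IH] z.
  case: (ltrgtP z 0) => hz.
  - by rewrite H_neg // Hbig //; lia.
  - by rewrite Hbig ?H_neg //; lia.
  - by rewrite hz.
rewrite exprSr !HMP (IH z) (IH (z - 1)) (IH (z - 1 - 1)).
have -> : (n%:Z + n%:Z - z = n.+1%:Z + n.+1%:Z - z - 1 - 1)%R by lia.
have -> : (n%:Z + n%:Z - (z - 1) = n.+1%:Z + n.+1%:Z - z - 1)%R by lia.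
have -> : (n%:Z + n%:Z - (z - 1 - 1) = n.+1%:Z + n.+1%:Z - z)%R by lia.
ring.
Qed.

Lemma part1 n k : trinom_coef n (n%:Z - k%:Z) = (k`!%:R)^-1 * (Q k).[n%:R].
Proof.
have -> : trinom_coef n (n%:Z - k%:Z) = H (P ^+ n) (n%:Z + (n%:Z - k%:Z)) by [].
rewrite Hsym (_ : (n%:Z + n%:Z - (n%:Z + (n%:Z - k%:Z)) = k%:Z)%R); last by lia.
rewrite (Qeval n k).1 mulKf //.
by rewrite pnatr_eq0 -lt0n fact_gt0.
Qed.

Lemma coef_size (p : {poly rat}) i : p`_i != 0 -> (i < size p)%N.
Proof.
move=> h; rewrite ltnNge; apply/negP => hs.
by move: h; rewrite nth_default.
Qed.

Lemma Qsize_aux k : ((size (Q k) <= k.+1)%N /\ (Q k)`_k = 1)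
  /\ ((size (Q k.+1) <= k.+2)%N /\ (Q k.+1)`_k.+1 = 1).
Proof.
elim: k => [|k [[IHs IHc] [IHs1 IHc1]]].
  rewrite Q0 Q1 size_polyX size_polyC coefC coefX /=; split => //.
split; first by split.
pose L : {poly rat} := (k.+1%:R)%:P * (2%:R *: 'X - (k.+1%:R)%:P + 1).
pose M : {poly rat} := 'X - (k.+1%:R)%:P.
have hL : (size L <= 2)%N.
  rewrite /L mul_polyC; apply: leq_trans (size_scale_leq _ _) _.
  have h2 : (size (2%:R *: 'X - (k.+1%:R)%:P + 1 : {poly rat})%R <= 2)%N.
    apply: leq_trans (size_polyD _ _) _; rewrite geq_max.
    apply/andP; split; last by apply: leq_trans (size_polyC_leq1 _) _.
    apply: leq_trans (size_polyD _ _) _; rewrite geq_max size_polyN.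
    apply/andP; split; last by apply: leq_trans (size_polyC_leq1 _) _.
    by apply: leq_trans (size_scale_leq _ _) _; rewrite size_polyX.
  exact: h2.
have hR : (size (L * Q k)%R <= k.+2)%N.
  apply: leq_trans (size_polyMleq _ _) _; lia.
have hA : (size (M * Q k.+1)%R <= k.+3)%N.
  apply: leq_trans (size_polyMleq _ _) _; rewrite /M size_XsubC; lia.
rewrite QS -/L -/M; split.
  apply: leq_trans (size_polyD _ _) _; rewrite geq_max hA /=; exact: leq_trans hR (leqnSn _).
rewrite coefD (nth_default _ hR) addr0 mulrBl coefB coefXM coefCM /= IHc1.
by rewrite (nth_default _ IHs1) mulr0 subr0.
Qed.

Lemma part2 k : size (Q k) = k.+1.
Proof.
have [[h1 h2] _] := Qsize_aux k.
apply/eqP; rewrite eqn_leq h1 /=; apply: coef_size; rewrite h2.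
exact: oner_neq0.
Qed.

Lemma sE (c : rat) (p : {poly rat}) : c *: p = c%:P * p.
Proof. by rewrite mul_polyC. Qed.

Lemma QS' k : Q k.+2 = ('X - (k.+1%:R)%:P) * Q k.+1
   + ((k.+1%:R)%:P * ((2%:R)%:P * 'X - (k.+1%:R)%:P + 1)) * Q k.
Proof. by rewrite QS sE. Qed.

Lemma q2 : Q 2 = 'X * ('X + 1).
Proof. rewrite QS' Q1 Q0. ring. Qed.
Lemma q3 : Q 3 = ('X - 1) * 'X * ('X + 4%:R%:P).
Proof. rewrite QS' q2 Q1. ring. Qed.
Lemma q4' : Q 4 = ('X - 1) * 'X * ('X^2 + (7%:R)%:P * 'X - 6%:R%:P).
Proof. rewrite QS' q3 q2. ring. Qed.
Lemma q5 : Q 5 = ('X - 2%:R%:P) * ('X - 1) * 'X * ('X + 1) * ('X + 12%:R%:P).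
Proof. rewrite QS' q4' q3. ring. Qed.
Lemma q6' : Q 6 = ('X - 2%:R%:P) * ('X - 1) * 'X
           * ('X^3 + (18%:R)%:P * 'X^2 + (17%:R)%:P * 'X - 120%:R%:P).
Proof. rewrite QS' q5 q4'. ring. Qed.
Lemma q7' : Q 7 = ('X - 3%:R%:P) * ('X - 2%:R%:P) * ('X - 1) * 'X
           * ('X^3 + (27%:R)%:P * 'X^2 + (116%:R)%:P * 'X - 120%:R%:P).
Proof. rewrite QS' q6' q5. ring. Qed.
Lemma q8' : Q 8 = ('X - 3%:R%:P) * ('X - 2%:R%:P) * ('X - 1) * 'X * ('X + 1)
           * ('X + 10%:R%:P) * ('X^2 + (23%:R)%:P * 'X - 84%:R%:P).
Proof. rewrite QS' q7' q6'. Time ring. Qed.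
Lemma q9' : Q 9 = 'X * ('X - 1) * ('X - 2%:R%:P) * ('X - 3%:R%:P) * ('X - 4%:R%:P)
           * ('X^4 + (46%:R)%:P * 'X^3 + (467%:R)%:P * 'X^2 + (86%:R)%:P * 'X
              - 3360%:R%:P).
Proof. rewrite QS' q8' q7'. Time ring. Qed.
Lemma q10' : Q 10 = 'X * ('X - 1) * ('X - 2%:R%:P) * ('X - 3%:R%:P) * ('X - 4%:R%:P)
           * ('X^5 + (55%:R)%:P * 'X^4 + (665%:R)%:P * 'X^3 - (895%:R)%:P * 'X^2
              - (16626%:R)%:P * 'X + 15120%:R%:P).
Proof. rewrite QS' q9' q8'. Time ring. Qed.

Lemma g4 (a b : rat) : ('X - 1) * 'X * ('X^2 + a *: 'X - b%:P)
  = ('X - 1) * 'X * ('X^2 + a%:P * 'X - b%:P).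
Proof. by rewrite !sE. Qed.
Lemma q4 : Q 4 = ('X - 1) * 'X * ('X^2 + 7%:R *: 'X - 6%:R%:P).
Proof. exact: etrans q4' (esym (g4 _ _)). Qed.
Lemma g6 (a b c : rat) : ('X - 2%:R%:P) * ('X - 1) * 'X
           * ('X^3 + a *: 'X^2 + b *: 'X - c%:P) = ('X - 2%:R%:P) * ('X - 1) * 'X
           * ('X^3 + a%:P * 'X^2 + b%:P * 'X - c%:P).
Proof. by rewrite !sE. Qed.
Lemma q6 : Q 6 = ('X - 2%:R%:P) * ('X - 1) * 'X
           * ('X^3 + 18%:R *: 'X^2 + 17%:R *: 'X - 120%:R%:P).
Proof. exact: etrans q6' (esym (g6 _ _ _)). Qed.
Lemma g7 (a b c : rat) : ('X - 3%:R%:P) * ('X - 2%:R%:P) * ('X - 1) * 'X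
           * ('X^3 + a *: 'X^2 + b *: 'X - c%:P) = ('X - 3%:R%:P) * ('X - 2%:R%:P) * ('X - 1) * 'X
           * ('X^3 + a%:P * 'X^2 + b%:P * 'X - c%:P).
Proof. by rewrite !sE. Qed.
Lemma q7 : Q 7 = ('X - 3%:R%:P) * ('X - 2%:R%:P) * ('X - 1) * 'X
           * ('X^3 + 27%:R *: 'X^2 + 116%:R *: 'X - 120%:R%:P).
Proof. exact: etrans q7' (esym (g7 _ _ _)). Qed.
Lemma g8 (a b c : rat) : ('X - 3%:R%:P) * ('X - 2%:R%:P) * ('X - 1) * 'X * ('X + 1)
           * ('X + c%:P) * ('X^2 + a *: 'X - b%:P) = ('X - 3%:R%:P) * ('X - 2%:R%:P) * ('X - 1) * 'X * ('X + 1)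
           * ('X + c%:P) * ('X^2 + a%:P * 'X - b%:P).
Proof. by rewrite !sE. Qed.
Lemma q8 : Q 8 = ('X - 3%:R%:P) * ('X - 2%:R%:P) * ('X - 1) * 'X * ('X + 1)
           * ('X + 10%:R%:P) * ('X^2 + 23%:R *: 'X - 84%:R%:P).
Proof. exact: etrans q8' (esym (g8 _ _ _)). Qed.
Lemma g9 (a b c d : rat) : 'X * ('X - 1) * ('X - 2%:R%:P) * ('X - 3%:R%:P) * ('X - 4%:R%:P)
           * ('X^4 + a *: 'X^3 + b *: 'X^2 + c *: 'X - d%:P) = 'X * ('X - 1) * ('X - 2%:R%:P) * ('X - 3%:R%:P) * ('X - 4%:R%:P)
           * ('X^4 + a%:P * 'X^3 + b%:P * 'X^2 + c%:P * 'X - d%:P).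
Proof. by rewrite !sE. Qed.
Lemma q9 : Q 9 = 'X * ('X - 1) * ('X - 2%:R%:P) * ('X - 3%:R%:P) * ('X - 4%:R%:P)
           * ('X^4 + 46%:R *: 'X^3 + 467%:R *: 'X^2 + 86%:R *: 'X
              - 3360%:R%:P).
Proof. exact: etrans q9' (esym (g9 _ _ _ _)). Qed.
Lemma g10 (a b c d e : rat) : 'X * ('X - 1) * ('X - 2%:R%:P) * ('X - 3%:R%:P) * ('X - 4%:R%:P)
           * ('X^5 + a *: 'X^4 + b *: 'X^3 - c *: 'X^2 - d *: 'X + e%:P) = 'X * ('X - 1) * ('X - 2%:R%:P) * ('X - 3%:R%:P) * ('X - 4%:R%:P)
           * ('X^5 + a%:P * 'X^4 + b%:P * 'X^3 - c%:P * 'X^2 - d%:P * 'X + e%:P).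
Proof. by rewrite !sE. Qed.
Lemma q10 : Q 10 = 'X * ('X - 1) * ('X - 2%:R%:P) * ('X - 3%:R%:P) * ('X - 4%:R%:P)
           * ('X^5 + 55%:R *: 'X^4 + 665%:R *: 'X^3 - 895%:R *: 'X^2
              - 16626%:R *: 'X + 15120%:R%:P).
Proof. exact: etrans q10' (esym (g10 _ _ _ _ _)). Qed.

Theorem corollary1 :
  (forall n k : nat,
      trinom_coef n (n%:Z - k%:Z) = (k`!%:R)^-1 * (Q k).[n%:R])
  /\ (forall k : nat, size (Q k) = k.+1)
  /\ Q 0 = 1
  /\ Q 1 = 'X
  /\ Q 2 = 'X * ('X + 1)
  /\ Q 3 = ('X - 1) * 'X * ('X + 4%:R%:P)
  /\ Q 4 = ('X - 1) * 'X * ('X^2 + 7%:R *: 'X - 6%:R%:P)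
  /\ Q 5 = ('X - 2%:R%:P) * ('X - 1) * 'X * ('X + 1) * ('X + 12%:R%:P)
  /\ Q 6 = ('X - 2%:R%:P) * ('X - 1) * 'X
           * ('X^3 + 18%:R *: 'X^2 + 17%:R *: 'X - 120%:R%:P)
  /\ Q 7 = ('X - 3%:R%:P) * ('X - 2%:R%:P) * ('X - 1) * 'X
           * ('X^3 + 27%:R *: 'X^2 + 116%:R *: 'X - 120%:R%:P)
  /\ Q 8 = ('X - 3%:R%:P) * ('X - 2%:R%:P) * ('X - 1) * 'X * ('X + 1)
           * ('X + 10%:R%:P) * ('X^2 + 23%:R *: 'X - 84%:R%:P)
  /\ Q 9 = 'X * ('X - 1) * ('X - 2%:R%:P) * ('X - 3%:R%:P) * ('X - 4%:R%:P)
           * ('X^4 + 46%:R *: 'X^3 + 467%:R *: 'X^2 + 86%:R *: 'X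
              - 3360%:R%:P)
  /\ Q 10 = 'X * ('X - 1) * ('X - 2%:R%:P) * ('X - 3%:R%:P) * ('X - 4%:R%:P)
           * ('X^5 + 55%:R *: 'X^4 + 665%:R *: 'X^3 - 895%:R *: 'X^2
              - 16626%:R *: 'X + 15120%:R%:P).
Proof.
split; first exact: part1.
split; first exact: part2.
do 2 (split; first by []).
split; first exact: q2.
split; first exact: q3.
split; first exact: q4.
split; first exact: q5.
split; first exact: q6.
split; first exact: q7.
split; first exact: q8.
split; first exact: q9.
exact: q10.
Qed.
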